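(* Assume $\delta>d$. Then the limit $$G_f^\alpha(z,w)=\lim_{n\to\infty}\frac{1}{\delta^n}\log^+\max\{|p^n(z)|^\alpha,\,|Q_z^n(w)|\}$$ exists for every $(z,w)\in\mathbb{C}^2$ and equals $\alpha G_p(z)$.
   Context: Let $p(z)=z^\delta+O(z^{\delta-1})$ be a monic polynomial of degree $\delta\ge 2$, and let $q(z,w)=b(z)w^d+(\text{terms of lower degree in } w)$ be a polynomial with $d=\deg_w q\ge 2$, where $b$ is a monic polynomial of degree $\gamma\ge 0$. Let $f(z,w)=(p(z),q(z,w))$. Write $q_z(w)=q(z,w)$ and $Q_z^n=q_{p^{n-1}(z)}\circ\cdots\circ q_{p(z)}\circ q_z$, so that $f^n(z,w)=(p^n(z),Q_z^n(w))$. Let $G_p(z)=\lim_{n\to\infty}\delta^{-n}\log^+|p^n(z)|$ (the Green function of $p$). For $\delta>d$, define $$\alpha=\max\Big\{\frac{n_j}{\delta-m_j}\;:\; z^{n_j}w^{m_j}\text{ is a monomial appearing in } q \text{ with nonzero coefficient}\Big\}\ \ (\ge 0).$$ *)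

(* Defs.v *)
From Stdlib Require Import Reals List.
Import ListNotations.
Open Scope R_scope.

(** Complex numbers as pairs (re, im). *)
Definition Cx : Type := (R * R)%type.
Definition C0 : Cx := (0, 0).
Definition C1 : Cx := (1, 0).
Definition Cadd (a b : Cx) : Cx := (fst a + fst b, snd a + snd b).
Definition Cmul (a b : Cx) : Cx :=
  (fst a * fst b - snd a * snd b, fst a * snd b + snd a * fst b).
Definition Cmod (a : Cx) : R := sqrt (fst a ^ 2 + snd a ^ 2).
Definition Cnz (c : Cx) : bool :=
  if Req_EM_T (fst c) 0 then (if Req_EM_T (snd c) 0 then false else true) else true.

(** One-variable polynomials: coefficient lists, lowest degree first. *)
Definition poly1 := list Cx.
Definition peval (l : poly1) (z : Cx) : Cx :=
  fold_right (fun a acc => Cadd a (Cmul z acc)) C0 l.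
Definition monic_deg (l : poly1) (k : nat) : Prop :=
  length l = S k /\ nth k l C0 = C1.

(** Two-variable polynomials q(z,w) = sum_m a_m(z) w^m, given as the list
    [a_0; a_1; ...] of one-variable polynomials in z. *)
Definition poly2 := list poly1.
Definition qeval (q : poly2) (z w : Cx) : Cx :=
  fold_right (fun a acc => Cadd (peval a z) (Cmul w acc)) C0 q.
(** coefficient of z^n w^m in q *)
Definition qcoef (q : poly2) (n m : nat) : Cx := nth n (nth m q []) C0.

Definition fmap (p : poly1) (q : poly2) (zw : Cx * Cx) : Cx * Cx :=
  (peval p (fst zw), qeval q (fst zw) (snd zw)).
Definition fiter (p : poly1) (q : poly2) (n : nat) (zw : Cx * Cx) : Cx * Cx :=
  Nat.iter n (fmap p q) zw.
Definition piter (p : poly1) (n : nat) (z : Cx) : Cx := Nat.iter n (peval p) z.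

(** alpha = max { n_j / (delta - m_j) : z^{n_j} w^{m_j} has nonzero coefficient }
    (monomials with zero coefficient contribute 0, which is harmless as alpha >= 0). *)
Definition alpha (delta : nat) (q : poly2) : R :=
  fold_right Rmax 0
    (flat_map (fun m =>
       map (fun n => if Cnz (qcoef q n m) then INR n / (INR delta - INR m) else 0)
           (seq 0 (length (nth m q []))))
       (seq 0 (length q))).

Definition logp (x : R) : R := if Rlt_dec 0 x then Rmax 0 (ln x) else 0.
(** x^a for x >= 0, a >= 0, with 0^0 = 1 and 0^a = 0 for a > 0. *)
Definition rpow (x a : R) : R :=
  if Rlt_dec 0 x then Rpower x a else (if Req_EM_T a 0 then 1 else 0).

(* Main.v *)
Require Import Defs.
From Stdlib Require Import Reals List Lra Lia Psatz.
From Coquelicot Require Complex.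
Import ListNotations.
Open Scope R_scope.

Lemma Cmod_add a b : Cmod (Cadd a b) <= Cmod a + Cmod b.
Proof. exact (Complex.Cmod_triangle a b). Qed.
Lemma Cmod_mul a b : Cmod (Cmul a b) = Cmod a * Cmod b.
Proof. exact (Complex.Cmod_mult a b). Qed.
Lemma Cmod_ge0 a : 0 <= Cmod a.
Proof. exact (Complex.Cmod_ge_0 a). Qed.
Lemma Cnz_false a : Cnz a = false -> Cmod a = 0.
Proof.
  destruct a as [x y]; unfold Cnz; simpl.
  destruct (Req_EM_T x 0); destruct (Req_EM_T y 0); try discriminate.
  intros _; subst; unfold Cmod; simpl. replace (0*(0*1)+0*(0*1)) with 0 by ring. apply sqrt_0.
Qed.

Definition S1 (l : poly1) : R := fold_right (fun a s => Cmod a + s) 0 l.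
Definition S2 (q : poly2) : R := fold_right (fun a s => S1 a + s) 0 q.
Lemma S1_ge0 l : 0 <= S1 l.
Proof. induction l; simpl; [lra|]. pose proof (Cmod_ge0 a); lra. Qed.
Lemma S2_ge0 q : 0 <= S2 q.
Proof. induction q; simpl; [lra|]. pose proof (S1_ge0 a); lra. Qed.

Lemma peval_bound (Z B : R) (z : Cx) : Cmod z <= Z -> 1 <= Z ->
  forall l X, 0 <= X ->
  (forall n, (n < length l)%nat -> Cnz (nth n l C0) = true -> X * Z^n <= B) ->
  X * Cmod (peval l z) <= S1 l * B.
Proof.
  intros Hz HZ l. induction l as [|a l IH]; intros X HX H.
  - simpl. unfold C0, Cmod; simpl. replace (0*(0*1)+0*(0*1)) with 0 by ring.
    rewrite sqrt_0. lra.
  - simpl peval. simpl S1.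
    assert (Ha : X * Cmod a <= Cmod a * B).
    { destruct (Cnz a) eqn:E.
      - specialize (H 0%nat ltac:(simpl; lia) E). simpl in H.
        pose proof (Cmod_ge0 a). nra.
      - rewrite (Cnz_false _ E). lra. }
    assert (Hr : (X * Cmod z) * Cmod (peval l z) <= S1 l * B).
    { apply IH. pose proof (Cmod_ge0 z); nra.
      intros n Hn Hc. specialize (H (S n) ltac:(simpl; lia) Hc). simpl in H.
      pose proof (pow_le Z n ltac:(lra)). pose proof (Cmod_ge0 z).
      assert (X * Cmod z * Z^n <= X * (Z * Z^n)).
      { rewrite Rmult_assoc. apply Rmult_le_compat_l; [lra|]. nra. }
      lra. }
    pose proof (Cmod_add a (Cmul z (peval l z))). rewrite Cmod_mul in H0.
    assert (X * Cmod (Cadd a (Cmul z (peval l z))) <= X * (Cmod a + Cmod z * Cmod (peval l z))).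
    { apply Rmult_le_compat_l; lra. }
    nra.
Qed.

Lemma qeval_bound (Z W B : R) (z w : Cx) : Cmod z <= Z -> 1 <= Z ->
  Cmod w <= W -> 1 <= W ->
  forall q X, 0 <= X ->
  (forall m n, (m < length q)%nat -> (n < length (nth m q []))%nat ->
     Cnz (qcoef q n m) = true -> X * Z^n * W^m <= B) ->
  X * Cmod (qeval q z w) <= S2 q * B.
Proof.
  intros Hz HZ Hw HW q. induction q as [|a q IH]; intros X HX H.
  - simpl. unfold C0, Cmod; simpl. replace (0*(0*1)+0*(0*1)) with 0 by ring.
    rewrite sqrt_0. lra.
  - simpl qeval. simpl S2.
    assert (Ha : X * Cmod (peval a z) <= S1 a * B).
    { apply (peval_bound Z B z Hz HZ a X HX).
      intros n Hn Hc. specialize (H 0%nat n ltac:(simpl; lia) Hn Hc). simpl in H. lra. }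
    assert (Hr : (X * Cmod w) * Cmod (qeval q z w) <= S2 q * B).
    { apply IH. pose proof (Cmod_ge0 w); nra.
      intros m n Hm Hn Hc. specialize (H (S m) n ltac:(simpl; lia) Hn Hc). simpl in H.
      pose proof (pow_le Z n ltac:(lra)). pose proof (pow_le W m ltac:(lra)).
      pose proof (Cmod_ge0 w).
      assert (X * Cmod w * Z ^ n * W ^ m <= X * Z ^ n * (W * W ^ m)).
      { replace (X * Cmod w * Z ^ n * W ^ m) with ((X * Z^n * W^m) * Cmod w) by ring.
        replace (X * Z ^ n * (W * W ^ m)) with ((X * Z^n * W^m) * W) by ring.
        apply Rmult_le_compat_l; [|lra].
        apply Rmult_le_pos; [apply Rmult_le_pos|]; lra. }
      lra. }
    pose proof (Cmod_add (peval a z) (Cmul w (qeval q z w))). rewrite Cmod_mul in H0.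
    assert (X * Cmod (Cadd (peval a z) (Cmul w (qeval q z w))) <= X * (Cmod (peval a z) + Cmod w * Cmod (qeval q z w))).
    { apply Rmult_le_compat_l; lra. }
    nra.
Qed.
Lemma ln_le x y : 0 < x -> x <= y -> ln x <= ln y.
Proof. intros. destruct H0. left; apply ln_increasing; auto. subst; lra. Qed.

Lemma logp_ge0 x : 0 <= logp x.
Proof. unfold logp; destruct (Rlt_dec 0 x); [apply Rmax_l|lra]. Qed.

Lemma logp_eq x : 0 <= x -> logp x = ln (Rmax 1 x).
Proof.
  intros Hx. unfold logp. destruct (Rlt_dec 0 x).
  - unfold Rmax. destruct (Rle_dec 0 (ln x)); destruct (Rle_dec 1 x); auto.
    + exfalso. assert (ln x < ln 1) by (apply ln_increasing; lra). rewrite ln_1 in H. lra.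
    + exfalso. apply n. rewrite <- ln_1. apply ln_le; lra.
    + symmetry; apply ln_1.
  - assert (x = 0) by lra. subst. unfold Rmax. destruct (Rle_dec 1 0); [lra|]. symmetry; apply ln_1.
Qed.

Lemma logp_mono x y : 0 <= x -> x <= y -> logp x <= logp y.
Proof.
  intros Hx Hxy. rewrite !logp_eq by lra. apply ln_le.
  - apply Rlt_le_trans with 1; [lra|apply Rmax_l].
  - apply Rle_max_compat_l; auto.
Qed.

Lemma logp_max x y : 0 <= x -> 0 <= y -> logp (Rmax x y) = Rmax (logp x) (logp y).
Proof.
  intros Hx Hy. destruct (Rle_dec x y).
  - rewrite Rmax_right by auto. rewrite Rmax_right; auto. apply logp_mono; auto.
  - rewrite Rmax_left by lra. rewrite Rmax_left; auto. apply logp_mono; lra.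
Qed.

Lemma rpow_ge0 x a : 0 <= rpow x a.
Proof.
  unfold rpow. destruct (Rlt_dec 0 x). unfold Rpower; left; apply exp_pos.
  destruct (Req_EM_T a 0); lra.
Qed.

Lemma logp_rpow x a : 0 <= x -> 0 <= a -> logp (rpow x a) = a * logp x.
Proof.
  intros Hx Ha. unfold rpow. destruct (Rlt_dec 0 x).
  - unfold logp at 1. destruct (Rlt_dec 0 (Rpower x a)).
    + unfold Rpower at 1. rewrite ln_exp. unfold logp. destruct (Rlt_dec 0 x); [|lra].
      rewrite <- RmaxRmult by auto. rewrite Rmult_0_r. reflexivity.
    + exfalso; apply n; unfold Rpower; apply exp_pos.
  - assert (logp x = 0) by (unfold logp; destruct (Rlt_dec 0 x); lra).
    rewrite H, Rmult_0_r. destruct (Req_EM_T a 0).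
    + unfold logp. destruct (Rlt_dec 0 1); [|lra]. rewrite ln_1. apply Rmax_left; lra.
    + unfold logp. destruct (Rlt_dec 0 0); lra.
Qed.

Lemma Rmax0_div X P : 0 < P -> Rmax 0 X / P = Rmax 0 (X / P).
Proof.
  intros HP. unfold Rmax. destruct (Rle_dec 0 X); destruct (Rle_dec 0 (X/P)).
  - reflexivity.
  - exfalso; apply n. unfold Rdiv. apply Rmult_le_pos; auto. left; apply Rinv_0_lt_compat; auto.
  - exfalso. assert (X/P < 0). { unfold Rdiv. apply Rmult_neg_pos; [lra|]. apply Rinv_0_lt_compat; auto. } lra.
  - unfold Rdiv; ring.
Qed.
Lemma foldmax_ge0 l : 0 <= fold_right Rmax 0 l.
Proof. induction l; simpl; [lra|]. eapply Rle_trans; [exact IHl|apply Rmax_r]. Qed.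
Lemma foldmax_in l x : In x l -> x <= fold_right Rmax 0 l.
Proof.
  induction l; simpl; [tauto|]. intros [<-|H]. apply Rmax_l.
  eapply Rle_trans; [apply IHl; auto|apply Rmax_r].
Qed.
Lemma alpha_ge0 delta q : 0 <= alpha delta q.
Proof. apply foldmax_ge0. Qed.
Lemma alpha_ge delta q m n : (m < length q)%nat -> (n < length (nth m q []))%nat ->
  Cnz (qcoef q n m) = true -> INR n / (INR delta - INR m) <= alpha delta q.
Proof.
  intros Hm Hn Hc. apply foldmax_in. apply in_flat_map. exists m. split.
  - apply in_seq. split. apply Nat.le_0_l. simpl. exact Hm.
  - apply in_map_iff. exists n. rewrite Hc. split; auto. apply in_seq. split. apply Nat.le_0_l. simpl. exact Hn.
Qed.

Lemma exp_le_exp x y : x <= y -> exp x <= exp y.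
Proof. intros [H|H]. left; apply exp_increasing; auto. subst; lra. Qed.

Lemma exp_pow L n : exp L ^ n = exp (INR n * L).
Proof. rewrite <- Rpower_pow by apply exp_pos. unfold Rpower. rewrite ln_exp. reflexivity. Qed.

Lemma Rmax1_exp x : 0 <= x -> Rmax 1 x = exp (logp x).
Proof. intros. rewrite logp_eq by auto. rewrite exp_ln; auto. apply Rlt_le_trans with 1; [lra|apply Rmax_l]. Qed.

Lemma p_bound delta p z : length p = S delta ->
  logp (Cmod (peval p z)) <= ln (S1 p + 1) + INR delta * logp (Cmod z).
Proof.
  intros Hl. set (Z := Rmax 1 (Cmod z)).
  assert (HZ : 1 <= Z) by apply Rmax_l.
  assert (Hb : 1 * Cmod (peval p z) <= S1 p * Z ^ delta).
  { apply (peval_bound Z (Z^delta) z); auto. apply Rmax_r. lra.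
    intros n Hn _. rewrite Rmult_1_l. apply Rle_pow; auto. lia. }
  pose proof (S1_ge0 p). pose proof (pow_le Z delta ltac:(lra)).
  assert (1 <= Z ^ delta) by (apply pow_R1_Rle; auto).
  rewrite logp_eq by apply Cmod_ge0.
  replace (INR delta * logp (Cmod z)) with (ln (Z ^ delta)).
  2:{ rewrite ln_pow by lra. rewrite logp_eq by apply Cmod_ge0. reflexivity. }
  rewrite <- ln_mult by lra. apply ln_le. apply Rlt_le_trans with 1; [lra|apply Rmax_l].
  apply Rmax_lub; nra.
Qed.

Lemma q_bound delta d q z w : length q = S d -> (d < delta)%nat ->
  let a := alpha delta q in
  let Lz := logp (Cmod z) in
  logp (Cmod (qeval q z w)) <=
    ln (S2 q + 1) + a * INR delta * Lz + INR d * Rmax 0 (logp (Cmod w) - a * Lz).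
Proof.
  intros Hl Hd a Lz. set (Lw := logp (Cmod w)).
  set (E := a * INR delta * Lz + INR d * Rmax 0 (Lw - a * Lz)).
  set (Z := Rmax 1 (Cmod z)). set (W := Rmax 1 (Cmod w)).
  assert (HZ : Z = exp Lz) by (apply Rmax1_exp, Cmod_ge0).
  assert (HW : W = exp Lw) by (apply Rmax1_exp, Cmod_ge0).
  assert (HLz : 0 <= Lz) by apply logp_ge0.
  assert (Ha : 0 <= a) by apply alpha_ge0.
  assert (HE : 0 <= E).
  { unfold E. pose proof (pos_INR delta); pose proof (pos_INR d).
    pose proof (Rmax_l 0 (Lw - a*Lz)).
    apply Rplus_le_le_0_compat; apply Rmult_le_pos; try apply Rmult_le_pos; lra. }
  assert (Hb : 1 * Cmod (qeval q z w) <= S2 q * exp E).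
  { apply (qeval_bound Z W); try apply Rmax_l; try apply Rmax_r; try lra.
    intros m n Hm Hn Hc. rewrite Rmult_1_l, HZ, HW, !exp_pow, <- exp_plus.
    pose proof (alpha_ge delta q m n Hm Hn Hc) as Hal. fold a in Hal.
    assert (Hmd : (m <= d)%nat) by (unfold poly2, poly1 in *; lia).
    apply le_INR in Hmd. assert (Hdl : INR d < INR delta) by (apply lt_INR; auto).
    assert (Hn' : INR n <= a * (INR delta - INR m)).
    { apply (Rmult_le_compat_r (INR delta - INR m)) in Hal; [|lra].
      unfold Rdiv in Hal. rewrite Rmult_assoc, Rinv_l, Rmult_1_r in Hal; lra. }
    apply exp_le_exp. unfold E.
    set (M := Rmax 0 (Lw - a * Lz)).
    assert (HM1 : Lw - a * Lz <= M) by apply Rmax_r.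
    assert (HM0 : 0 <= M) by apply Rmax_l.
    pose proof (pos_INR m) as Hm0.
    assert (H1 : INR n * Lz <= a * (INR delta - INR m) * Lz) by (apply Rmult_le_compat_r; auto).
    assert (H2 : INR m * (Lw - a * Lz) <= INR m * M) by (apply Rmult_le_compat_l; auto).
    assert (H3 : INR m * M <= INR d * M) by (apply Rmult_le_compat_r; auto).
    nra. }
  rewrite Rmult_1_l in Hb.
  pose proof (S2_ge0 q). pose proof (exp_pos E).
  assert (1 <= exp E) by (rewrite <- exp_0; apply exp_le_exp; auto).
  rewrite logp_eq by apply Cmod_ge0.
  replace (ln (S2 q + 1) + a * INR delta * Lz + INR d * Rmax 0 (Lw - a * Lz)) with (ln ((S2 q + 1) * exp E)).
  2:{ rewrite ln_mult, ln_exp by lra. unfold E. ring. }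
  apply ln_le. apply Rlt_le_trans with 1; [lra|apply Rmax_l].
  apply Rmax_lub; nra.
Qed.
Lemma Rdiv_le_0_compat a b : 0 <= a -> 0 < b -> 0 <= a / b.
Proof. intros. unfold Rdiv. apply Rmult_le_pos; auto. left; apply Rinv_0_lt_compat; auto. Qed.

Lemma Un_cv_ext u v l : (forall n, u n = v n) -> Un_cv u l -> Un_cv v l.
Proof. intros He H eps Heps. destruct (H eps Heps) as [N HN]. exists N. intros n Hn. rewrite <- He. auto. Qed.

Lemma geo_cv r : 0 <= r < 1 -> Un_cv (fun n => r ^ n) 0.
Proof.
  intros Hr eps Heps. destruct (pow_lt_1_zero r ltac:(rewrite Rabs_pos_eq; lra) eps Heps) as [N HN].
  exists N. intros n Hn. unfold Rdist. rewrite Rminus_0_r. auto.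
Qed.

Lemma rec_cv (e t : nat -> R) (r : R) : (forall n, 0 <= e n) -> 0 <= r < 1 ->
  (forall n, e (S n) <= r * e n + t n) -> Un_cv t 0 -> Un_cv e 0.
Proof.
  intros He Hr Hrec Ht eps Heps.
  set (eta := eps * (1 - r) / 2).
  assert (Heta : 0 < eta) by (unfold eta; nra).
  destruct (Ht eta Heta) as [N HN].
  assert (Hk : forall k, e (N + k)%nat <= r ^ k * e N + eta / (1 - r)).
  { induction k.
    - rewrite Nat.add_0_r. simpl. assert (0 <= eta / (1-r)) by (apply Rdiv_le_0_compat; lra). lra.
    - replace (N + S k)%nat with (S (N + k)) by lia.
      specialize (HN (N + k)%nat ltac:(lia)). unfold Rdist in HN. rewrite Rminus_0_r in HN.
      apply Rabs_def2 in HN.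
      eapply Rle_trans; [apply Hrec|]. simpl.
      assert (r * e (N + k)%nat <= r * (r ^ k * e N + eta / (1 - r))) by (apply Rmult_le_compat_l; lra).
      assert (eta / (1 - r) = r * (eta / (1 - r)) + eta) by (field; lra).
      lra. }
  set (y := eps / (2 * (e N + 1))).
  assert (Hy : 0 < y) by (unfold y; pose proof (He N); apply Rdiv_lt_0_compat; lra).
  destruct (pow_lt_1_zero r ltac:(rewrite Rabs_pos_eq; lra) y Hy) as [K HK].
  exists (N + K)%nat. intros n Hn.
  replace n with (N + (n - N))%nat by lia.
  specialize (Hk (n - N)%nat). specialize (HK (n - N)%nat ltac:(lia)).
  rewrite Rabs_pos_eq in HK by (apply pow_le; lra).
  unfold Rdist. rewrite Rminus_0_r. rewrite Rabs_pos_eq by apply He.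
  assert (Hb : r ^ (n - N) * e N < y * (e N + 1)).
  { pose proof (He N). pose proof (pow_le r (n-N) ltac:(lra)). nra. }
  assert (y * (e N + 1) = eps / 2) by (unfold y; field; pose proof (He N); lra).
  assert (eta / (1 - r) = eps / 2) by (unfold eta; field; lra).
  lra.
Qed.

Lemma green_cv (L : nat -> R) (D c : R) : (forall n, 0 <= L n) -> 1 < D -> 0 <= c ->
  (forall n, L (S n) <= c + D * L n) -> exists G, Un_cv (fun n => L n / D ^ n) G.
Proof.
  intros HL HD Hc Hrec.
  set (b := fun n => L n / D ^ n + c / (D - 1) * (/ D) ^ n).
  assert (Hdec : Un_decreasing b).
  { intro n. unfold b. simpl pow.
    assert (HP : 0 < D ^ n) by (apply pow_lt; lra).
    rewrite !pow_inv. simpl.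
    assert (L (S n) / (D * D ^ n) <= (c + D * L n) / (D * D ^ n)).
    { unfold Rdiv. apply Rmult_le_compat_r; [|auto]. left; apply Rinv_0_lt_compat; nra. }
    assert ((c + D * L n) / (D * D ^ n) + c / (D - 1) * (/ D * / D ^ n) = L n / D ^ n + c / (D - 1) * / D ^ n)
      by (field; lra).
    lra. }
  assert (Hlb : has_lb b).
  { exists 0. intros x [i ->]. unfold opp_seq, b.
    assert (0 <= L i / D ^ i) by (apply Rdiv_le_0_compat; [auto|apply pow_lt; lra]).
    assert (0 <= c / (D - 1) * (/ D) ^ i).
    { apply Rmult_le_pos. apply Rdiv_le_0_compat; lra. apply pow_le. left; apply Rinv_0_lt_compat; lra. }
    lra. }
  destruct (decreasing_cv b Hdec Hlb) as [G HG].
  exists G.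
  assert (Hg : Un_cv (fun n => c / (D - 1) * (/ D) ^ n) 0).
  { replace 0 with (c / (D - 1) * 0) by ring. apply CV_mult. intros eps He; exists 0%nat; intros; unfold Rdist; rewrite Rminus_diag, Rabs_R0; lra.
    apply geo_cv. split. left; apply Rinv_0_lt_compat; lra. rewrite <- Rinv_1. apply Rinv_lt_contravar; lra. }
  replace G with (G - 0) by ring.
  apply (Un_cv_ext (fun n => b n - c / (D - 1) * (/ D) ^ n)). intro n; unfold b; ring.
  apply CV_minus; auto.
Qed.

Lemma cv_const k : Un_cv (fun _ => k) k.
Proof. intros eps He; exists 0%nat; intros; unfold Rdist; rewrite Rminus_diag, Rabs_R0; lra. Qed.

Lemma cv_max0 u : Un_cv u 0 -> Un_cv (fun n => Rmax 0 (u n)) 0.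
Proof.
  intros H eps He. destruct (H eps He) as [N HN]. exists N. intros n Hn.
  specialize (HN n Hn). unfold Rdist in *. rewrite Rminus_0_r in *.
  unfold Rmax. destruct (Rle_dec 0 (u n)); auto. rewrite Rabs_R0; lra.
Qed.

Lemma Rmax_split X Y : Rmax X Y = X + Rmax 0 (Y - X).
Proof. unfold Rmax. destruct (Rle_dec X Y); destruct (Rle_dec 0 (Y - X)); lra. Qed.

Lemma fst_fiter p q n zw : fst (fiter p q n zw) = piter p n (fst zw).
Proof. induction n; simpl; auto. unfold fiter in *. simpl. rewrite IHn. reflexivity. Qed.

Theorem corollary4p2 (delta d gamma : nat) (p : poly1) (q : poly2) :
  (2 <= delta)%nat -> monic_deg p delta ->
  (2 <= d)%nat -> length q = S d -> monic_deg (nth d q []) gamma ->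
  (d < delta)%nat ->
  forall z w : Cx,
    exists Gp : R,
      Un_cv (fun n => logp (Cmod (piter p n z)) / INR delta ^ n) Gp /\
      Un_cv (fun n =>
               logp (Rmax (rpow (Cmod (fst (fiter p q n (z, w)))) (alpha delta q))
                          (Cmod (snd (fiter p q n (z, w))))) / INR delta ^ n)
            (alpha delta q * Gp).
Proof.
  intros Hdel [Hlp _] Hd2 Hlq _ Hdd z w.
  set (D := INR delta). set (a := alpha delta q).
  assert (HD : 1 < D) by (unfold D; apply (lt_INR 1); lia).
  assert (Ha : 0 <= a) by apply alpha_ge0.
  set (L := fun n => logp (Cmod (piter p n z))).
  set (U := fun n => logp (Cmod (snd (fiter p q n (z, w))))).
  set (c1 := ln (S1 p + 1)). set (c2 := ln (S2 q + 1)).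
  assert (Hc1 : 0 <= c1) by (unfold c1; rewrite <- ln_1; apply ln_le; pose proof (S1_ge0 p); lra).
  assert (Hc2 : 0 <= c2) by (unfold c2; rewrite <- ln_1; apply ln_le; pose proof (S2_ge0 q); lra).
  assert (HL0 : forall n, 0 <= L n) by (intro; apply logp_ge0).
  assert (HLrec : forall n, L (S n) <= c1 + D * L n).
  { intro n. unfold L. simpl piter. apply p_bound. exact Hlp. }
  destruct (green_cv L D c1 HL0 HD Hc1 HLrec) as [G HG].
  exists G. split; [exact HG|].
  assert (HUrec : forall n, U (S n) <= c2 + a * D * L n + INR d * Rmax 0 (U n - a * L n)).
  { intro n. unfold U, L. 
    change (snd (fiter p q (S n) (z, w))) with
      (qeval q (fst (fiter p q n (z, w))) (snd (fiter p q n (z, w)))).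
    rewrite fst_fiter. simpl fst.
    apply (q_bound delta d q); auto. }
  set (r := INR d / D).
  assert (Hr : 0 <= r < 1).
  { unfold r. assert (INR d < D) by (unfold D; apply lt_INR; auto). pose proof (pos_INR d).
    split. apply Rdiv_le_0_compat; lra. apply (Rmult_lt_reg_r D); [lra|]. unfold Rdiv.
    rewrite Rmult_assoc, Rinv_l by lra. lra. }
  set (e := fun n => Rmax 0 (U n / D ^ n - a * (L n / D ^ n))).
  set (tt := fun n => c2 / D ^ (S n) + a * (L n / D ^ n - L (S n) / D ^ (S n))).
  assert (Hrec : forall n, e (S n) <= r * e n + Rmax 0 (tt n)).
  { intro n. unfold e, tt.
    assert (HP : 0 < D ^ n) by (apply pow_lt; lra).
    set (M := Rmax 0 (U n - a * L n)).
    assert (H1 : U (S n) / D ^ S n <= (c2 + a * D * L n + INR d * M) / D ^ S n).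
    { unfold Rdiv. apply Rmult_le_compat_r. left; apply Rinv_0_lt_compat; apply pow_lt; lra. apply HUrec. }
    assert (H2 : (c2 + a * D * L n + INR d * M) / D ^ S n = c2 / D ^ S n + a * (L n / D ^ n) + r * (M / D ^ n)).
    { unfold r. simpl. field. lra. }
    assert (H3 : M / D ^ n = Rmax 0 (U n / D ^ n - a * (L n / D ^ n))).
    { unfold M. rewrite Rmax0_div by auto. f_equal. field. lra. }
    rewrite H3 in H2.
    pose proof (Rmax_l 0 (U n / D ^ n - a * (L n / D ^ n))).
    pose proof (Rmax_l 0 (c2 / D ^ S n + a * (L n / D ^ n - L (S n) / D ^ S n))).
    pose proof (Rmax_r 0 (c2 / D ^ S n + a * (L n / D ^ n - L (S n) / D ^ S n))).
    apply Rmax_lub.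
    - assert (0 <= r * Rmax 0 (U n / D ^ n - a * (L n / D ^ n))) by (apply Rmult_le_pos; lra). lra.
    - lra. }
  assert (Htt : Un_cv tt 0).
  { unfold tt. replace 0 with (c2 * 0 * / D + a * (G - G)) by ring.
    apply CV_plus.
    - apply (Un_cv_ext (fun n => c2 * (/ D) ^ n * / D)).
      { intro n. simpl. rewrite pow_inv. field. split; [apply pow_nonzero|]; lra. }
      apply CV_mult; [|apply cv_const]. apply CV_mult; [apply cv_const|].
      apply geo_cv. split. left; apply Rinv_0_lt_compat; lra. rewrite <- Rinv_1. apply Rinv_lt_contravar; lra.
    - apply CV_mult; [apply cv_const|]. apply CV_minus; auto.
      intros eps He. destruct (HG eps He) as [N HN]. exists N. intros n Hn. apply (HN (S n)). lia. }
  assert (He0 : forall n, 0 <= e n) by (intro; apply Rmax_l).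
  pose proof (rec_cv e (fun n => Rmax 0 (tt n)) r He0 Hr Hrec (cv_max0 tt Htt)) as Hecv.
  replace (a * G) with (a * G + 0) by ring.
  apply (Un_cv_ext (fun n => a * (L n / D ^ n) + e n)).
  { intro n. unfold e, L, U. rewrite fst_fiter. simpl fst.
    rewrite logp_max by (apply rpow_ge0 || apply Cmod_ge0).
    rewrite logp_rpow by (apply Cmod_ge0 || exact Ha).
    fold D. assert (HP : 0 < D ^ n) by (apply pow_lt; lra).
    set (X := a * logp (Cmod (piter p n z))). set (Y := logp (Cmod (snd (fiter p q n (z, w))))).
    rewrite (Rmax_split X Y).
    replace ((X + Rmax 0 (Y - X)) / D ^ n) with (X / D ^ n + Rmax 0 (Y - X) / D ^ n) by (field; lra).
    rewrite Rmax0_div by auto. unfold X. f_equal; [|f_equal]; field; lra. }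
  apply CV_plus; auto. apply CV_mult; auto. apply cv_const.
Qed.
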